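(* Let $F:\{0,1\}^n\to\mathbb{F}^E_m\cap[0,1]$ be a finite-precision CDF over a binary number format $\mathcal{B}=(n,\gamma_{\mathcal{B}},\phi_{\mathcal{B}})$. Then the procedure $\textsc{Opt}(F)$ described in the context halts almost surely, returns a string $X\in\{0,1\}^n$ with $\Pr(X\le_{\mathcal{B}}x)=F(x)$ for every $x\in\{0,1\}^n$, and is entropy-optimal: its expected number of fair random bits drawn equals the minimum expected entropy cost over all random variate generators with the same output distribution.
   Context: $\overline{\mathbb{R}}=\mathbb{R}\cup\{-\infty,+\infty,\bot\}$ is totally ordered by $-\infty<$ reals $<+\infty<\bot$. A binary number format $\mathcal{B}=(n,\gamma_{\mathcal{B}},\phi_{\mathcal{B}})$ consists of $n\ge1$, $\gamma_{\mathcal{B}}:\{0,1\}^n\to\overline{\mathbb{R}}$, and a bijection $\phi_{\mathcal{B}}$ of $\{0,1\}^n$ with $b<_{\mathrm{dict}}b'\Rightarrow\gamma_{\mathcal{B}}(\phi_{\mathcal{B}}(b))\le\gamma_{\mathcal{B}}(\phi_{\mathcal{B}}(b'))$; it induces the order $b<_{\mathcal{B}}b'$ iff $\phi_{\mathcal{B}}^{-1}(b)<_{\mathrm{dict}}\phi_{\mathcal{B}}^{-1}(b')$. $\mathbb{F}^E_m\cap[0,1]$ is the set of reals in $[0,1]$ representable as floating-point numbers with $E$ exponent and $m$ mantissa bits. A finite-precision CDF over $\mathcal{B}$ is $F:\{0,1\}^n\to\mathbb{F}^E_m\cap[0,1]$ with $F(\phi_{\mathcal{B}}(1^n))=1$ and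 $b<_{\mathcal{B}}b'\Rightarrow F(b)\le F(b')$. For $z\in[0,1]$ with concise binary expansion $(z_0.z_1z_2\ldots)_2$ (not ending in infinitely many 1s) write $[z]_j=z_j$. $\textsc{Opt}(F,b,\ell,f_0,f_1)$, called initially as $\textsc{Opt}(F,\varepsilon,0,0,1)$: if $|b|=n$ return $\phi_{\mathcal{B}}(b)$. Let $f_2=F(\phi_{\mathcal{B}}(b\,0\,1^{n-|b|-1}))$. If $f_2=f_1$ return $\textsc{Opt}(F,b0,\ell,f_0,f_2)$; if $f_2=f_0$ return $\textsc{Opt}(F,b1,\ell,f_2,f_1)$. Let $a_0(j)=[f_2-f_0]_j$ and $a_1(j)=[f_1-f_2]_j$ (exact real differences). If $\ell>0$: if $a_0(\ell)=1$ and $a_1(\ell)=0$ return $\textsc{Opt}(F,b0,\ell,f_0,f_2)$; if $a_0(\ell)=0$ and $a_1(\ell)=1$ return $\textsc{Opt}(F,b1,\ell,f_2,f_1)$. Then repeat: draw a fair random bit $x$, set $\ell\leftarrow\ell+1$; if $x=0$ and $a_0(\ell)=1$ return $\textsc{Opt}(F,b0,\ell,f_0,f_2)$; if $x=1$ and $a_1(\ell)=1$ return $\textsc{Opt}(F,b1,\ell,f_2,f_1)$. A random variate generator for a distribution $q$ on $\{0,1\}^n$ is a partial map $Y:\{0,1\}^*\rightharpoonup\{0,1\}^n$ with prefix-free domain, $\sum_{u\in\mathrm{dom}(Y)}2^{-|u|}=1$ and $\sum_{u}2^{-|u|}\mathbf{1}[Y(u)=s]=q(s)$; its expected entropy cost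 is $\sum_{u\in\mathrm{dom}(Y)}|u|2^{-|u|}$. *)

(* Defs.v *)
From HB Require Import structures.
From mathcomp Require Import all_boot all_order all_algebra all_fingroup.
From mathcomp Require Import all_classical all_reals all_analysis.
Set Implicit Arguments. Unset Strict Implicit. Unset Printing Implicit Defensive.
Import Order.TTheory GRing.Theory Num.Theory.
Local Open Scope ring_scope.

Inductive xreal (R : Type) := XNegInf | XReal of R | XPosInf | XBot.
Arguments XNegInf {R}. Arguments XPosInf {R}. Arguments XBot {R}.

Definition xrank (R : Type) (x : xreal R) : nat :=
  match x with XNegInf => 0 | XReal _ => 1 | XPosInf => 2 | XBot => 3 end%N.

Definition xle (R : realType) (x y : xreal R) : bool :=
  match x, y with
  | XReal a, XReal b => a <= b
  | _, _ => (xrank x <= xrank y)%N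
  end.

Fixpoint dict_lt (s t : seq bool) : bool :=
  match s, t with
  | x :: s', y :: t' => (~~ x && y) || ((x == y) && dict_lt s' t')
  | _, _ => false
  end.

Definition is_number_format (R : realType) (n : nat)
    (gamma : n.-tuple bool -> xreal R) (phi : {perm n.-tuple bool}) : Prop :=
  (1 <= n)%N /\
  forall b b' : n.-tuple bool, dict_lt b b' -> xle (gamma (phi b)) (gamma (phi b')).

Definition fmt_lt (n : nat) (phi : {perm n.-tuple bool}) (b b' : n.-tuple bool) : bool :=
  dict_lt ((phi^-1)%g b) ((phi^-1)%g b').
Definition fmt_le (n : nat) (phi : {perm n.-tuple bool}) (b b' : n.-tuple bool) : bool :=
  (b == b') || fmt_lt phi b b'.

(* ---------- floating point numbers with E exponent bits and m mantissa bits
   (IEEE-754 style: bias 2^(E-1)-1, normal exponent fields 1..2^E-2,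
   subnormals with exponent 1-bias; signed). *)
Definition fp_bias (E : nat) : int := (2 ^ E.-1)%:Z - 1.
Definition fp_emin (E : nat) : int := 1 - fp_bias E.
Definition fp_emax (E : nat) : int := (2 ^ E)%:Z - 2 - fp_bias E.

Definition float_repr (R : realType) (E m : nat) (x : R) : Prop :=
  exists (sgn : bool) (f : nat), (f < 2 ^ m)%N /\
   (
     x = (-1) ^+ sgn * (f%:R / 2 ^+ m) * (2 : R) ^ fp_emin E
   \/
     exists e : int, fp_emin E <= e /\ e <= fp_emax E /\
       x = (-1) ^+ sgn * (1 + f%:R / 2 ^+ m) * (2 : R) ^ e ).

Definition is_fp_cdf (R : realType) (E m n : nat) (phi : {perm n.-tuple bool})
    (F : n.-tuple bool -> R) : Prop :=
  (forall b, float_repr E m (F b) /\ 0 <= F b <= 1) /\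
  F (phi [tuple of nseq n true]) = 1 /\
  (forall b b', fmt_lt phi b b' -> F b <= F b').

Definition bdigit (R : realType) (z : R) (j : nat) : bool :=
  ~~ (2%:Z %| Num.floor (z * 2 ^+ j))%Z.

(* Returns Some (x, rest) if it halts with output x having read the bits
   not in rest; None if it needs more bits than supplied.
   k = n - |b| is the remaining depth. *)
Section Opt.
Variables (R : realType) (n : nat) (phi : {perm n.-tuple bool})
          (F : n.-tuple bool -> R).

Definition to_tuple (s : seq bool) : n.-tuple bool :=
  insubd [tuple of nseq n false] s.

Fixpoint opt_desc (k : nat) (b : seq bool) (l : nat) (f0 f1 : R)
    (bits : seq bool) {struct k} : option (n.-tuple bool * seq bool) :=
  match k with
  | 0%N => Some (phi (to_tuple b), bits)
  | k'.+1 =>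
    let f2 := F (phi (to_tuple (b ++ false :: nseq (n - size b - 1) true))) in
    if f2 == f1 then opt_desc k' (rcons b false) l f0 f2 bits else
    if f2 == f0 then opt_desc k' (rcons b true) l f2 f1 bits else
    let a0 := bdigit (f2 - f0) in
    let a1 := bdigit (f1 - f2) in
    if (0 < l)%N && a0 l && ~~ a1 l then opt_desc k' (rcons b false) l f0 f2 bits else
    if (0 < l)%N && ~~ a0 l && a1 l then opt_desc k' (rcons b true) l f2 f1 bits else
    (fix loop (l : nat) (bs : seq bool) {struct bs} :=
       match bs with
       | [::] => None
       | x :: bs' =>
         let l' := l.+1 in
         if ~~ x && a0 l' then opt_desc k' (rcons b false) l' f0 f2 bs' else
         if x && a1 l' then opt_desc k' (rcons b true) l' f2 f1 bs' else
         loop l' bs'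
       end) l bits
  end.

Definition opt_exec (bits : seq bool) : option (n.-tuple bool * seq bool) :=
  opt_desc n [::] 0 0 1 bits.

Definition opt_gen (u : seq bool) : option (n.-tuple bool) :=
  match opt_exec u with
  | Some (x, [::]) => Some x
  | _ => None
  end.
End Opt.

Section Gen.
Variables (R : realType) (n : nat).
Local Open Scope ereal_scope.

Definition level_mass (P : seq bool -> bool) (k : nat) : R :=
  (\sum_(u : k.-tuple bool | P u) (2 ^- k))%R.

Definition str_mass (P : seq bool -> bool) : \bar R :=
  \sum_(k <oo) (level_mass P k)%:E.

Definition gen_prob (Y : seq bool -> option (n.-tuple bool)) (s : n.-tuple bool)
  : \bar R := str_mass (fun u => Y u == Some s).

Definition gen_cost (Y : seq bool -> option (n.-tuple bool)) : \bar R :=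
  \sum_(k <oo) (k%:R * level_mass (fun u => Y u != None) k)%:E.

Definition prefix_free (Y : seq bool -> option (n.-tuple bool)) : Prop :=
  forall u v, Y u != None -> Y v != None -> prefix u v -> u = v.

Definition is_generator (Y : seq bool -> option (n.-tuple bool))
    (q : n.-tuple bool -> \bar R) : Prop :=
  prefix_free Y /\
  str_mass (fun u => Y u != None) = 1 /\
  forall s, gen_prob Y s = q s.
End Gen.

(* Main.v *)
Require Import Defs.
From HB Require Import structures.
From mathcomp Require Import all_boot all_order all_algebra all_fingroup.
From mathcomp Require Import all_classical all_reals all_analysis.
From mathcomp Require Import zify ring lra.
Import Order.TTheory GRing.Theory Num.Theory.
Set Implicit Arguments. Unset Strict Implicit. Unset Printing Implicit Defensive.
Local Open Scope ring_scope.
Section PartA.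
Variable R : realType.
Implicit Types z u v w : R.

Definition Zf (z : R) (m : nat) : int := Num.floor (z * 2 ^+ m).

Lemma floor2 (y : R) : Num.floor (y * 2) = 2 * Num.floor y + (if (2 %| Num.floor (y * 2))%Z then 0 else 1).
Proof.
have [h1 h2] := andP (floor_itv y).
have L : (2 * Num.floor y <= Num.floor (y * 2))%R.
  by rewrite floor_ge_int rmorphM /=; nra.
have U : (Num.floor (y * 2) < 2 * Num.floor y + 2)%R.
  rewrite floor_lt_int rmorphD rmorphM /=; rewrite rmorphD /= in h2; nra.
move: L U; set a := Num.floor y; set b := Num.floor (y * 2) => L U.
clear h1 h2; case: ifP => H; lia.
Qed.

Lemma Zf_S z m : Zf z m.+1 = 2 * Zf z m + (if bdigit z m.+1 then 1 else 0).
Proof.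
rewrite /Zf /bdigit !exprSr !mulrA; set y := z * 2 ^+ m.
have := floor2 y; case: ifP => /= _ ->; by [].
Qed.

Lemma floorD_bounds (a b : R) :
  (Num.floor a + Num.floor b <= Num.floor (a + b) <= Num.floor a + Num.floor b + 1)%R.
Proof.
have [a1 a2] := andP (floor_itv a). have [b1 b2] := andP (floor_itv b).
apply/andP; split.
  by rewrite floor_ge_int rmorphD /=; lra.
rewrite -ltzD1 floor_lt_int !rmorphD /=; rewrite !rmorphD /= in a2 b2; lra.
Qed.

Lemma kappa01 u v m : (0 <= Zf (u + v) m - Zf u m - Zf v m <= 1)%R.
Proof.
have := floorD_bounds (u * 2 ^+ m) (v * 2 ^+ m); rewrite /Zf mulrDl.
move: (Num.floor (u * 2 ^+ m)) (Num.floor (v * 2 ^+ m)) (Num.floor (u * 2 ^+ m + v * 2 ^+ m)) => a b c.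
move=> /andP [h1 h2]; apply/andP; split; lia.
Qed.

Lemma bdigit_Z z m : bdigit z m = ~~ (2 %| Zf z m)%Z.
Proof. by []. Qed.

Lemma Zf0_01 z : 0 <= z <= 1 -> Zf z 0 = (z == 1)%:R.
Proof.
move=> /andP [z0 z1]; rewrite /Zf expr0 mulr1.
case: eqP => [->|ne]; first by rewrite floor1.
apply: floor_def; rewrite /= add0r; apply/andP; split => //.
by rewrite lt_neqAle z1 andbT; apply/eqP.
Qed.

Lemma bdigit0_01 z : 0 <= z <= 1 -> bdigit z 0 = (z == 1).
Proof. by move=> h; rewrite bdigit_Z Zf0_01 //; case: (z == 1). Qed.

Definition dyadic (N : nat) (z : R) := exists i : int, z * 2 ^+ N = i%:~R.

Lemma dyadic_sub N a b : dyadic N a -> dyadic N b -> dyadic N (a - b).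
Proof. by move=> [i hi] [j hj]; exists (i - j); rewrite mulrBl hi hj rmorphB. Qed.
Lemma dyadic0 N : dyadic N 0. Proof. by exists 0; rewrite mul0r. Qed.
Lemma dyadic1 N : dyadic N 1. Proof. by exists (2 ^+ N); rewrite mul1r rmorphXn. Qed.

Lemma Zf_dyadic N z m : dyadic N z -> (N <= m)%N -> (Zf z m)%:~R = z * 2 ^+ m.
Proof.
move=> [i hi] Nm; rewrite /Zf -(subnKC Nm) exprD mulrA hi.
have -> : (i%:~R * 2 ^+ (m - N) : R) = (i * 2 ^+ (m - N))%:~R by rewrite rmorphM rmorphXn.
by rewrite intrKfloor.
Qed.

Lemma bdigit_dyadic N z m : dyadic N z -> (N < m)%N -> bdigit z m = false.
Proof.
move=> [i hi] Nm; have [k ->] : exists k, m = (N + k.+1)%N by exists (m - N.+1)%N; lia.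
rewrite bdigit_Z /Zf exprD mulrA hi exprS.
have -> : (i%:~R * (2 * 2 ^+ k) : R) = (2 * (i * 2 ^+ k))%:~R.
  by rewrite !rmorphM rmorphXn /= mulrCA.
by rewrite intrKfloor dvdz_mulr.
Qed.

Lemma bits_partial z M : 0 <= z <= 1 ->
  \sum_(j < M.+1) (bdigit z j)%:R * (2 ^+ j)^-1 = (Zf z M)%:~R / 2 ^+ M :> R.
Proof.
move=> hz; elim: M => [|M IH].
  by rewrite big_ord1 expr0 invr1 !mulr1 Zf0_01 // bdigit0_01 //; case: (z == 1).
rewrite big_ord_recr /= IH Zf_S rmorphD rmorphM /= exprS invfM.
have -> : ((if bdigit z M.+1 then 1 else 0 : int)%:~R) = (bdigit z M.+1)%:R :> R by case: (bdigit _ _).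
have h2 : (2 : R) != 0 by [].
by field; exact: expf_neq0.
Qed.

Lemma Zf_ge0 z m : 0 <= z -> 0 <= Zf z m.
Proof. by move=> h; rewrite /Zf floor_ge0 mulr_ge0 // exprn_ge0. Qed.

Lemma Zf_le z m : (Zf z m)%:~R <= z * 2 ^+ m.
Proof. exact: floor_le. Qed.

End PartA.
Section PartB.
Variable R : realType.

Lemma lm_ext (P Q : seq bool -> bool) k :
  (forall u : seq bool, size u = k -> P u = Q u) -> level_mass R P k = level_mass R Q k.
Proof. by move=> h; apply: eq_bigl => u; rewrite h // size_tuple. Qed.

Lemma lm_mkcond (P : seq bool -> bool) k :
  level_mass R P k = \sum_(u : k.-tuple bool) (if P u then (2 ^+ k)^-1 else 0).
Proof. by rewrite /level_mass big_mkcond. Qed.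

Lemma lm0 (P : seq bool -> bool) : level_mass R P 0 = if P [::] then 1 else 0.
Proof.
rewrite lm_mkcond (eq_bigr (fun _ => if P [::] then 1 else 0)); last first.
  by move=> u _; rewrite (tuple0 u) expr0 invr1.
by rewrite sumr_const card_tuple expn0 mulr1n.
Qed.

Lemma lmS (P : seq bool -> bool) k :
  level_mass R P k.+1 =
  (level_mass R (fun u => P (false :: u)) k + level_mass R (fun u => P (true :: u)) k) / 2.
Proof.
rewrite lm_mkcond (reindex (fun p : bool * k.-tuple bool => [tuple of p.1 :: p.2])) /=; last first.
  exists (fun u : k.+1.-tuple bool => (thead u, [tuple of behead u])).
    by move=> [x t] _ /=; rewrite theadE; congr pair; apply: val_inj.
  by move=> u _; rewrite [in RHS](tuple_eta u).
rewrite -(pair_bigA _ (fun x (t : k.-tuple bool) => if P (x :: t) then (2 ^+ k.+1)^-1 else 0)) /=.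
rewrite big_bool /= !lm_mkcond mulrDl !mulr_suml addrC; congr (_ + _);
  by apply: eq_bigr => u _; case: ifP; rewrite ?mul0r // exprS invfM mulrC.
Qed.

Lemma lm_ge0 (P : seq bool -> bool) k : 0 <= level_mass R P k.
Proof. by apply: sumr_ge0 => u _; rewrite invr_ge0 exprn_ge0. Qed.

Lemma lm_count (P : seq bool -> bool) k :
  level_mass R P k = #|[pred u : k.-tuple bool | P u]|%:R / 2 ^+ k.
Proof. by rewrite /level_mass sumr_const mulr_natl. Qed.

Lemma lm_partition (T : finType) (Y : seq bool -> option T) k :
  level_mass R (fun u => Y u != None) k = \sum_(x : T) level_mass R (fun u => Y u == Some x) k.
Proof.
rewrite lm_mkcond (eq_bigr (fun u : k.-tuple bool => \sum_(x : T) if Y u == Some x then (2 ^+ k)^-1 else 0)).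
  by rewrite exchange_big /=; apply: eq_bigr => x _; rewrite lm_mkcond.
move=> u _; case E: (Y u) => [y|] /=.
  rewrite (bigD1 y) //= eqxx big1 ?addr0 // => x /negPf xy.
  by case: eqP => // [[]] e; rewrite e eqxx in xy.
by rewrite big1.
Qed.

Lemma lm_le1 (P : seq bool -> bool) k : level_mass R P k <= 1.
Proof.
rewrite lm_count.
have h : (#|[pred u : k.-tuple bool | P u]| <= 2 ^ k)%N.
  by have := max_card [pred u : k.-tuple bool | P u]; rewrite card_tuple card_bool.
rewrite ler_pdivrMr ?exprn_gt0 // mul1r -natrX ler_nat //.
Qed.

End PartB.
Section PartC.
Variables (R : realType) (n : nat) (phi : {perm n.-tuple bool}) (F : n.-tuple bool -> R).

Definition f2of (b : seq bool) : R := F (phi (to_tuple n (b ++ false :: nseq (n - size b - 1) true))).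

Definition oloop (k' : nat) (b : seq bool) (f0 f1 f2 : R) (l : nat) (bs : seq bool)
  : option (n.-tuple bool * seq bool) :=
  (fix loop (l : nat) (bs : seq bool) {struct bs} :=
  match bs with
  | [::] => None
  | x :: bs' =>
    if ~~ x && bdigit (f2 - f0) l.+1 then opt_desc phi F k' (rcons b false) l.+1 f0 f2 bs' else
    if x && bdigit (f1 - f2) l.+1 then opt_desc phi F k' (rcons b true) l.+1 f2 f1 bs' else
    loop l.+1 bs'
  end) l bs.

Lemma oloop_nil k' b f0 f1 f2 l : oloop k' b f0 f1 f2 l [::] = None.
Proof. by []. Qed.

Lemma oloop_cons k' b f0 f1 f2 l x bs : oloop k' b f0 f1 f2 l (x :: bs) =
    if ~~ x && bdigit (f2 - f0) l.+1 then opt_desc phi F k' (rcons b false) l.+1 f0 f2 bs else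
    if x && bdigit (f1 - f2) l.+1 then opt_desc phi F k' (rcons b true) l.+1 f2 f1 bs else
    oloop k' b f0 f1 f2 l.+1 bs.
Proof. by []. Qed.

Lemma opt_desc_S k b l f0 f1 bits : opt_desc phi F k.+1 b l f0 f1 bits =
  let f2 := f2of b in
  if f2 == f1 then opt_desc phi F k (rcons b false) l f0 f2 bits else
  if f2 == f0 then opt_desc phi F k (rcons b true) l f2 f1 bits else
  if (0 < l)%N && bdigit (f2 - f0) l && ~~ bdigit (f1 - f2) l
    then opt_desc phi F k (rcons b false) l f0 f2 bits else
  if (0 < l)%N && ~~ bdigit (f2 - f0) l && bdigit (f1 - f2) l
    then opt_desc phi F k (rcons b true) l f2 f1 bits else
  oloop k b f0 f1 (f2of b) l bits.
Proof. by []. Qed.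

Lemma opt_desc_0 b l f0 f1 bits : opt_desc phi F 0 b l f0 f1 bits = Some (phi (to_tuple n b), bits).
Proof. by []. Qed.

Lemma opt_out k : forall b l f0 f1 bits y r, opt_desc phi F k b l f0 f1 bits = Some (y, r) ->
  exists c, size c = k /\ y = phi (to_tuple n (b ++ c)).
Proof.
elim: k => [|k IH] b l f0 f1 bits y r.
  by rewrite opt_desc_0 => -[<- _]; exists [::]; rewrite cats0.
have Hl : forall bb ff0 ff1 ll bs, opt_desc phi F k (rcons b bb) ll ff0 ff1 bs = Some (y, r) ->
    exists c, size c = k.+1 /\ y = phi (to_tuple n (b ++ c)).
  move=> bb ff0 ff1 ll bs /IH [c [sc ->]]; exists (bb :: c); split; first by rewrite /= sc.
  by rewrite cat_rcons.
rewrite opt_desc_S /=.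
case: ifP => _; first exact: Hl.
case: ifP => _; first exact: Hl.
case: ifP => _; first exact: Hl.
case: ifP => _; first exact: Hl.
elim: bits l => [|x bs IHb] l; rewrite ?oloop_nil ?oloop_cons //.
case: ifP => _; first exact: Hl.
case: ifP => _; first exact: Hl.
exact: IHb.
Qed.

Lemma opt_app k : forall b l f0 f1 bits w y r, opt_desc phi F k b l f0 f1 bits = Some (y, r) ->
  opt_desc phi F k b l f0 f1 (bits ++ w) = Some (y, r ++ w).
Proof.
elim: k => [|k IH] b l f0 f1 bits w y r.
  by rewrite !opt_desc_0 => -[<- <-].
rewrite !opt_desc_S /=.
case: ifP => _; first exact: IH.
case: ifP => _; first exact: IH.
case: ifP => _; first exact: IH.
case: ifP => _; first exact: IH.
elim: bits l => [|x bs IHb] l; rewrite ?oloop_nil ?oloop_cons //.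
case: ifP => _; first exact: IH.
case: ifP => _; first exact: IH.
exact: IHb.
Qed.

End PartC.
Lemma dict_lt_cat (b s t : seq bool) : dict_lt (b ++ s) (b ++ t) = dict_lt s t.
Proof. by elim: b => //= x b ->; rewrite eqxx andNb /=. Qed.

Lemma dict_lt_irr (s : seq bool) : dict_lt s s = false.
Proof. by elim: s => //= x s ->; rewrite andNb andbF. Qed.

Section PartD.
Variables (R : realType) (n : nat) (phi : {perm n.-tuple bool}) (F : n.-tuple bool -> R).
Variable N : nat.
Hypothesis F01 : forall b, 0 <= F b <= 1.
Hypothesis Fmono : forall b b', fmt_lt phi b b' -> F b <= F b'.
Hypothesis Ftop : F (phi [tuple of nseq n true]) = 1.
Hypothesis Fdy : forall b, dyadic N (F b).

Lemma to_tupleK (s : seq bool) : size s = n -> val (to_tuple n s) = s.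
Proof. by move=> h; rewrite /to_tuple insubdK //; apply/eqP. Qed.

Lemma Fmono_seq (s t : seq bool) : size s = n -> size t = n -> dict_lt s t ->
  F (phi (to_tuple n s)) <= F (phi (to_tuple n t)).
Proof. by move=> hs ht h; apply: Fmono; rewrite /fmt_lt !permK !to_tupleK. Qed.

Inductive V : nat -> seq bool -> R -> R -> Prop :=
| Vroot : V n [::] 0 1
| VL k b f0 f1 : V k.+1 b f0 f1 -> V k (rcons b false) f0 (f2of phi F b)
| VR k b f0 f1 : V k.+1 b f0 f1 -> V k (rcons b true) (f2of phi F b) f1.

Lemma V_inv k b f0 f1 : V k b f0 f1 ->
  [/\ (size b + k)%N = n, f1 = F (phi (to_tuple n (b ++ nseq k true))),
      (forall c, size c = k -> f0 <= F (phi (to_tuple n (b ++ c)))), 0 <= f0 &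
      (dyadic N f0 /\ dyadic N f1)].
Proof.
elim => {k b f0 f1} [|k b f0 f1 _ [sb e1 h0 p0 [d0 d1]]|k b f0 f1 _ [sb e1 h0 p0 [d0 d1]]].
- split => //; last by split; [exact: dyadic0|exact: dyadic1].
  + by rewrite -Ftop /=; congr (F (phi _)); apply: val_inj; rewrite to_tupleK // size_nseq.
  + by move=> c _; have /andP[] := F01 (phi (to_tuple n ([::] ++ c))).
- have ek : (n - size b - 1)%N = k by lia.
  split.
  + by rewrite size_rcons; lia.
  + by rewrite /f2of ek cat_rcons.
  + by move=> c sc; rewrite cat_rcons; apply: h0; rewrite /= sc.
  + exact: p0.
  + by split => //; exact: Fdy.
- have ek : (n - size b - 1)%N = k by lia.
  split.
  + by rewrite size_rcons; lia.
  + by rewrite e1 cat_rcons.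
  + move=> c sc; rewrite cat_rcons /f2of ek; apply: Fmono_seq.
    * by rewrite size_cat /= size_nseq; lia.
    * by rewrite size_cat /= sc; lia.
    * by rewrite dict_lt_cat.
  + by have /andP[] := F01 (phi (to_tuple n (b ++ false :: nseq (n - size b - 1) true))).
  + by split => //; exact: Fdy.
Qed.

Lemma V_le k b f0 f1 : V k b f0 f1 -> 0 <= f0 <= f1 /\ f1 <= 1.
Proof.
move/V_inv => [sb e1 h0 p0 _]; split.
  by rewrite p0 /= e1; apply: h0; rewrite size_nseq.
by rewrite e1; have /andP[] := F01 (phi (to_tuple n (b ++ nseq k true))).
Qed.

Lemma V_f2 k b f0 f1 : V k.+1 b f0 f1 -> f0 <= f2of phi F b <= f1.
Proof.
move=> hV; have := V_inv hV => -[sb e1 h0 p0 _]; have ek : (n - size b - 1)%N = k by lia.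
apply/andP; split.
  by rewrite /f2of ek; apply: h0; rewrite /= size_nseq.
rewrite e1 /f2of ek; apply: Fmono_seq.
- by rewrite size_cat /= size_nseq; lia.
- by rewrite size_cat /= size_nseq; lia.
- by rewrite dict_lt_cat.
Qed.

Lemma V_ex k b f0 f1 : V k b f0 f1 -> forall c, size c = k -> exists f0' f1', V 0 (b ++ c) f0' f1'.
Proof.
elim: k b f0 f1 => [|k IH] b f0 f1 hV [|x c] //= sc.
  by exists f0, f1; rewrite cats0.
case: sc => sc; case: x.
  by have := IH _ _ _ (VR hV) c sc; rewrite cat_rcons.
by have := IH _ _ _ (VL hV) c sc; rewrite cat_rcons.
Qed.

End PartD.
Section PartE.
Variable R : realType.
Definition bitR (z : R) (l : nat) : R := (bdigit z l)%:R.
Definition p2 (l : nat) : R := (2 ^+ l)^-1.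

Lemma p2S l : p2 l = 2 * p2 l.+1.
Proof. by rewrite /p2 exprS invfM mulrA divff ?mul1r. Qed.

Lemma b2i (b : bool) : ((b%:R : R) = ((if b then 1 else 0 : int))%:~R).
Proof. by case: b. Qed.

Lemma step_id (t hL Lh : R) (u' v' w' : bool) (k0 k1 : int) :
  (0 <= k0 <= 1) -> k1 = 2 * k0 + (if w' then 1 else 0) - (if u' then 1 else 0) - (if v' then 1 else 0) ->
  (0 <= k1 <= 1) ->
  k0%:~R * (2 * t) * (((if u' then hL else Lh) + (if v' then 0 else Lh)) / 2)
   + (w'%:R) * t * (if u' && ~~ v' then hL else if ~~ u' && v' then 0 else Lh)
  = (u'%:R) * t * hL + k1%:~R * t * Lh.
Proof.
move=> hk0 hk1 hk1'.
have [e0|e0] : k0 = 0 \/ k0 = 1 by lia.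
all: have [e1|e1] : k1 = 0 \/ k1 = 1 by lia.
all: rewrite e0 e1 in hk1 *.
all: case: u' v' w' hk1 => [] [] [] /= hk1; try lia.
all: rewrite ?mulr1z ?mulr0z ?mulr1n ?mulr0n; lra.
Qed.

Lemma carry_sum (u v w : R) (hB hL hR Lh : nat -> nat -> R) J :
  w = u + v -> 0 < u -> 0 < v -> w <= 1 ->
  (forall l i, hB l i = if (0 < l)%N && bdigit u l && ~~ bdigit v l then hL l i
     else if (0 < l)%N && ~~ bdigit u l && bdigit v l then hR l i else Lh l i) ->
  (forall l, Lh l 0%N = 0) ->
  (forall l i, Lh l i.+1 = ((if bdigit u l.+1 then hL l.+1 i else Lh l.+1 i)
                         + (if bdigit v l.+1 then hR l.+1 i else Lh l.+1 i)) / 2) ->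
  (forall l i, hR l i = 0) ->
  \sum_(0 <= l < J.+1) bitR w l * p2 l * hB l (J - l)%N
   = \sum_(0 <= j < J.+1) bitR u j * p2 j * hL j (J - j)%N.
Proof.
move=> ew u0 v0 w1 hBE Lh0 LhS hR0.
set kap := fun m => Zf w m - Zf u m - Zf v m.
have kap01 : forall m, 0 <= kap m <= 1 by move=> m; rewrite /kap ew; exact: kappa01.
have u1 : u < 1 by lra.
have v1 : v < 1 by lra.
have G : forall m, (m <= J)%N ->
  \sum_(0 <= l < J.+1) bitR w l * p2 l * hB l (J - l)%N =
  \sum_(0 <= j < m.+1) bitR u j * p2 j * hL j (J - j)%N
   + (kap m)%:~R * p2 m * Lh m (J - m)%N
   + \sum_(m.+1 <= l < J.+1) bitR w l * p2 l * hB l (J - l)%N.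
  elim => [_|m IH mJ].
    rewrite big_ltn // big_nat1 hBE /= subn0.
    have hu0 : bdigit u 0 = false.
      by rewrite bdigit0_01; [exact: (lt_eqF u1) | apply/andP; split; lra].
    have hv0 : bdigit v 0 = false.
      by rewrite bdigit0_01; [exact: (lt_eqF v1) | apply/andP; split; lra].
    have hw0 : bdigit w 0 = (w == 1) by rewrite bdigit0_01 //; apply/andP; split; lra.
    have -> : kap 0%N = (if w == 1 then 1 else 0).
      rewrite /kap !Zf0_01; [|apply/andP; split; lra ..].
      by rewrite (lt_eqF u1) (lt_eqF v1); case: (w == 1).
    by rewrite /bitR hu0 hw0; case: (w == 1); rewrite /= ?mul0r ?add0r ?addr0 ?mulr1n.
  have mJ' : (m.+1 < J.+1)%N by [].
  rewrite IH ?(ltnW mJ) // [in RHS]big_nat_recr //= [in LHS](big_ltn mJ') !addrA.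
  congr (_ + _); rewrite -!addrA; congr (_ + _).
  have -> : (J - m)%N = (J - m.+1).+1 by lia.
  rewrite LhS hBE hR0 (p2S m) /bitR /=.
  apply: step_id; [exact: kap01 | | exact: kap01].
  rewrite /kap !Zf_S.
  by ring.
have := G J (leqnn J); rewrite subnn Lh0 mulr0 addr0 => ->.
by rewrite [X in _ + X = _]big_geq // addr0.
Qed.

End PartE.
Arguments p2 {R} l.

Section PartE2.
Variable R : realType.
Lemma carry_sum_r (u v w : R) (hB hL hR Lh : nat -> nat -> R) J :
  w = u + v -> 0 < u -> 0 < v -> w <= 1 ->
  (forall l i, hB l i = if (0 < l)%N && bdigit u l && ~~ bdigit v l then hL l i
     else if (0 < l)%N && ~~ bdigit u l && bdigit v l then hR l i else Lh l i) ->
  (forall l, Lh l 0%N = 0) ->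
  (forall l i, Lh l i.+1 = ((if bdigit u l.+1 then hL l.+1 i else Lh l.+1 i)
                         + (if bdigit v l.+1 then hR l.+1 i else Lh l.+1 i)) / 2) ->
  (forall l i, hL l i = 0) ->
  \sum_(0 <= l < J.+1) bitR w l * p2 l * hB l (J - l)%N
   = \sum_(0 <= j < J.+1) bitR v j * p2 j * hR j (J - j)%N.
Proof.
move=> ew u0 v0 w1 hBE Lh0 LhS hL0.
apply: (@carry_sum R v u w hB hR hL Lh) => //.
- by rewrite addrC.
- move=> l i; rewrite hBE.
  by case: (0 < l)%N; case: (bdigit u l); case: (bdigit v l).
- by move=> l i; rewrite LhS addrC.
Qed.
End PartE2.
Section PartF.
Variables (R : realType) (n : nat) (phi : {perm n.-tuple bool}) (F : n.-tuple bool -> R).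
Variable N : nat.
Hypothesis F01 : forall b, 0 <= F b <= 1.
Hypothesis Fmono : forall b b', fmt_lt phi b b' -> F b <= F b'.
Hypothesis Ftop : F (phi [tuple of nseq n true]) = 1.
Hypothesis Fdy : forall b, dyadic N (F b).

Definition hS k b l f0 f1 x J :=
  level_mass R (fun u => opt_desc phi F k b l f0 f1 u == Some (x, [::])) J.
Definition Lh k b f0 f1 f2 l x J :=
  level_mass R (fun u => oloop phi F k b f0 f1 f2 l u == Some (x, [::])) J.

Lemma lm_false k : level_mass R (fun _ => false) k = 0.
Proof. by rewrite /level_mass big_pred0. Qed.

Lemma hS_0 b l f0 f1 x i :
  hS 0 b l f0 f1 x i = if (x == phi (to_tuple n b)) && (i == 0%N) then 1 else 0.
Proof.
rewrite /hS; case: i => [|i].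
  by rewrite lm0 opt_desc_0 andbT; case: (x =P _) => [->|ne]; rewrite ?eqxx //;
     case: eqP => // -[e]; rewrite e in ne.
rewrite andbF (@lm_ext R _ (fun _ => false)) ?lm_false // => u su.
rewrite opt_desc_0; apply/eqP => -[_ e]; by rewrite e in su.
Qed.

Lemma hS_none k b l f0 f1 x i :
  (forall c, size c = k -> x != phi (to_tuple n (b ++ c))) -> hS k b l f0 f1 x i = 0.
Proof.
move=> h; rewrite /hS (@lm_ext R _ (fun _ => false)) ?lm_false // => u _.
apply/eqP => /opt_out [c [sc e]]; by have := h c sc; rewrite e eqxx.
Qed.

Lemma hS_eq1 k b l f0 f1 x i : f2of phi F b == f1 ->
  hS k.+1 b l f0 f1 x i = hS k (rcons b false) l f0 (f2of phi F b) x i.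
Proof. by move=> h; apply: lm_ext => u _; rewrite opt_desc_S /= h. Qed.

Lemma hS_eq0 k b l f0 f1 x i : f2of phi F b != f1 -> f2of phi F b == f0 ->
  hS k.+1 b l f0 f1 x i = hS k (rcons b true) l (f2of phi F b) f1 x i.
Proof. by move=> h1 h0; apply: lm_ext => u _; rewrite opt_desc_S /= (negPf h1) h0. Qed.

Lemma hS_loop k b l f0 f1 x i : f2of phi F b != f1 -> f2of phi F b != f0 ->
  let f2 := f2of phi F b in
  hS k.+1 b l f0 f1 x i =
  if (0 < l)%N && bdigit (f2 - f0) l && ~~ bdigit (f1 - f2) l then hS k (rcons b false) l f0 f2 x i
  else if (0 < l)%N && ~~ bdigit (f2 - f0) l && bdigit (f1 - f2) l then hS k (rcons b true) l f2 f1 x i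
  else Lh k b f0 f1 f2 l x i.
Proof.
move=> h1 h0 /=; rewrite /hS /Lh.
case: ifP => c1; [|case: ifP => c2]; apply: lm_ext => u _;
  by rewrite opt_desc_S /= (negPf h1) (negPf h0) ?c1 ?c2.
Qed.

Lemma Lh_0 k b f0 f1 f2 l x : Lh k b f0 f1 f2 l x 0 = 0.
Proof. by rewrite /Lh lm0 oloop_nil. Qed.

Lemma Lh_S k b f0 f1 f2 l x i : Lh k b f0 f1 f2 l x i.+1 =
  ((if bdigit (f2 - f0) l.+1 then hS k (rcons b false) l.+1 f0 f2 x i else Lh k b f0 f1 f2 l.+1 x i)
 + (if bdigit (f1 - f2) l.+1 then hS k (rcons b true) l.+1 f2 f1 x i else Lh k b f0 f1 f2 l.+1 x i)) / 2.
Proof.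
rewrite /Lh lmS; congr ((_ + _) / 2).
  by case: ifP => h; apply: lm_ext => u _; rewrite oloop_cons /= h.
by case: ifP => h; apply: lm_ext => u _; rewrite oloop_cons /= h.
Qed.

Lemma sub_disj (b c c' : seq bool) (x y : bool) : size (b ++ x :: c) = n -> size (b ++ y :: c') = n ->
  x != y -> phi (to_tuple n (b ++ x :: c)) != phi (to_tuple n (b ++ y :: c')).
Proof.
move=> s1 s2 xy; apply/negP => /eqP /perm_inj e.
have := congr1 val e; rewrite !to_tupleK // => /(congr1 (drop (size b))).
by rewrite !drop_size_cat // => -[e']; rewrite e' eqxx in xy.
Qed.

Definition hroot x J := hS n [::] 0 0 1 x J.

Lemma bdigit0 l : bdigit (0 : R) l = false.
Proof. by rewrite bdigit_Z /Zf mul0r floor0. Qed.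

Lemma star k b f0 f1 : V phi F k b f0 f1 -> forall c, size c = k -> forall J,
  hroot (phi (to_tuple n (b ++ c))) J =
  \sum_(0 <= l < J.+1) bitR (f1 - f0) l * p2 l * hS k b l f0 f1 (phi (to_tuple n (b ++ c))) (J - l)%N.
Proof.
elim => {k b f0 f1} [|k b f0 f1 HV IH|k b f0 f1 HV IH] c sc J.
- rewrite big_ltn // big_nat_cond big1 ?addr0.
    rewrite subr0 /bitR bdigit0_01 ?eqxx /= ?mulr1n /p2 ?expr0 ?invr1 ?div1r ?invr1 ?mul1r ?subn0 //; by rewrite ler01 lexx.
  move=> l /andP [/andP [l1 _] _]; rewrite /bitR (@bdigit_dyadic R 0) ?mul0r //.
  by rewrite subr0; exact: dyadic1.
- have [sb _ _ _ _] := V_inv F01 Fmono Ftop Fdy HV.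
  have [/andP [f00 f01] f11] := V_le F01 Fmono Ftop Fdy HV.
  have /andP [f02 f21] := V_f2 F01 Fmono Ftop Fdy HV.
  have := IH (false :: c) ltac:(by rewrite /= sc) J; rewrite -cat_rcons => ->.
  set x := phi (to_tuple n (rcons b false ++ c)).
  have xnot : forall l i, hS k (rcons b true) l (f2of phi F b) f1 x i = 0.
    move=> l i; apply: hS_none => c' sc'; rewrite /x !cat_rcons eq_sym; apply: sub_disj => //.
    + by rewrite size_cat /= sc'; lia.
    + by rewrite size_cat /= sc; lia.
  case: (eqVneq (f2of phi F b) f1) => e1.
    by apply: eq_bigr => l _; rewrite hS_eq1 ?e1 ?eqxx.
  case: (eqVneq (f2of phi F b) f0) => e0.
    have e0' : f2of phi F b == f0 by rewrite e0.
    rewrite [RHS]big1; last by move=> l _; rewrite e0 subrr /bitR bdigit0 !mul0r.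
    by rewrite big1 // => l _; rewrite hS_eq0 // xnot mulr0.
  apply: (@carry_sum R (f2of phi F b - f0) (f1 - f2of phi F b) (f1 - f0)
            (fun l i => hS k.+1 b l f0 f1 x i) (fun l i => hS k (rcons b false) l f0 (f2of phi F b) x i)
            (fun l i => hS k (rcons b true) l (f2of phi F b) f1 x i)
            (fun l i => Lh k b f0 f1 (f2of phi F b) l x i)).
  + by ring.
  + by rewrite subr_gt0 lt_neqAle f02 eq_sym e0.
  + by rewrite subr_gt0 lt_neqAle f21 e1.
  + lra.
  + by move=> l i; rewrite hS_loop.
  + by move=> l; rewrite Lh_0.
  + by move=> l i; rewrite Lh_S.
  + exact: xnot.
- have [sb _ _ _ _] := V_inv F01 Fmono Ftop Fdy HV.
  have [/andP [f00 f01] f11] := V_le F01 Fmono Ftop Fdy HV.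
  have /andP [f02 f21] := V_f2 F01 Fmono Ftop Fdy HV.
  have := IH (true :: c) ltac:(by rewrite /= sc) J; rewrite -cat_rcons => ->.
  set x := phi (to_tuple n (rcons b true ++ c)).
  have xnot : forall l i, hS k (rcons b false) l f0 (f2of phi F b) x i = 0.
    move=> l i; apply: hS_none => c' sc'; rewrite /x !cat_rcons eq_sym; apply: sub_disj => //.
    + by rewrite size_cat /= sc'; lia.
    + by rewrite size_cat /= sc; lia.
  case: (eqVneq (f2of phi F b) f1) => e1.
    have e1' : f2of phi F b == f1 by rewrite e1.
    rewrite [RHS]big1; last by move=> l _; rewrite e1 subrr /bitR bdigit0 !mul0r.
    by rewrite big1 // => l _; rewrite hS_eq1 // xnot mulr0.
  case: (eqVneq (f2of phi F b) f0) => e0.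
    by apply: eq_bigr => l _; rewrite hS_eq0 ?e1 ?e0 ?eqxx.
  apply: (@carry_sum_r R (f2of phi F b - f0) (f1 - f2of phi F b) (f1 - f0)
            (fun l i => hS k.+1 b l f0 f1 x i)
            (fun l i => hS k (rcons b false) l f0 (f2of phi F b) x i)
            (fun l i => hS k (rcons b true) l (f2of phi F b) f1 x i)
            (fun l i => Lh k b f0 f1 (f2of phi F b) l x i)).
  + by ring.
  + by rewrite subr_gt0 lt_neqAle f02 eq_sym e0.
  + by rewrite subr_gt0 lt_neqAle f21 e1.
  + lra.
  + by move=> l i; rewrite hS_loop.
  + by move=> l; rewrite Lh_0.
  + by move=> l i; rewrite Lh_S.
  + exact: xnot.
Qed.

End PartF.
Section PartG.
Variable R : realType.
Local Open Scope ereal_scope.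

Lemma nneseries_ub (u : nat -> \bar R) (x : \bar R) : (forall k, 0 <= u k) ->
  (forall K, \sum_(0 <= i < K) u i <= x) -> \sum_(i <oo) u i <= x.
Proof.
move=> u0 h.
have := @ereal_nondecreasing_series R u xpredT 0%N (fun k _ _ => u0 k).
move/ereal_nondecreasing_cvgn/cvg_lim => E.
rewrite (_ : \sum_(i <oo) u i = limn (fun n => \sum_(0 <= i < n | xpredT i) u i)) //.
rewrite E //; apply: ge_ereal_sup => _ [K _ <-]; exact: h.
Qed.

Lemma series_fin (a : nat -> R) M : (forall J, (0 <= a J)%R) -> (forall J, (M <= J)%N -> a J = 0%R) ->
  \sum_(J <oo) (a J)%:E = (\sum_(0 <= J < M) a J)%:E.
Proof.
move=> a0 aM.
rewrite (@nneseries_split R (fun J => (a J)%:E) 0 M) ?add0n; last by move=> k _; rewrite lee_fin.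
rewrite eseries0 ?adde0 ?sumEFin // => i Mi _; by rewrite aM.
Qed.

End PartG.
Section PartH.
Variables (R : realType) (n : nat) (phi : {perm n.-tuple bool}) (F : n.-tuple bool -> R).
Variable N : nat.
Hypothesis F01 : forall b, 0 <= F b <= 1.
Hypothesis Fmono : forall b b', fmt_lt phi b b' -> F b <= F b'.
Hypothesis Ftop : F (phi [tuple of nseq n true]) = 1.
Hypothesis Fdy : forall b, dyadic N (F b).

Local Notation Y := (opt_gen phi F).
Local Notation hroot := (hroot phi F).

Lemma leaf_h b f0 f1 J : V phi F 0 b f0 f1 ->
  hroot (phi (to_tuple n b)) J = bitR (f1 - f0) J * p2 J.
Proof.
move=> HV; have := star F01 Fmono Ftop Fdy HV (c := [::]) erefl J; rewrite cats0 => ->.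
rewrite big_nat_recr //= big_nat_cond big1 ?add0r.
  by rewrite hS_0 eqxx subnn /= mulr1.
move=> l /andP [/andP [_ lJ] _]; rewrite hS_0 eqxx /=.
have -> : (J - l == 0)%N = false by apply/negbTE; rewrite subn_eq0 -ltnNge.
by rewrite mulr0.
Qed.

Lemma lm_Y x J : level_mass R (fun u => Y u == Some x) J = hroot x J.
Proof.
apply: lm_ext => u _; rewrite /opt_gen /opt_exec.
case: (opt_desc phi F n [::] 0 0 1 u) => [[y [|r rs]]|] //=.
- by apply/eqP/eqP => [[->]|[->]].
- by apply/esym/eqP.
Qed.

Lemma series_bits (w : R) : 0 <= w <= 1 -> dyadic N w ->
  (\sum_(J <oo) (bitR w J * p2 J)%:E)%E = w%:E.
Proof.
move=> w01 dw.
rewrite (@series_fin R _ N.+1).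
- congr EFin; rewrite big_mkord bits_partial //.
  by rewrite (Zf_dyadic dw (leqnn N)) mulfK // expf_neq0.
- by move=> J; rewrite mulr_ge0 // ?invr_ge0 ?exprn_ge0 // /bitR; case: (bdigit _ _).
- by move=> J NJ; rewrite /bitR (bdigit_dyadic dw NJ) mul0r.
Qed.

Lemma gp_leaf b f0 f1 : V phi F 0 b f0 f1 -> gen_prob R Y (phi (to_tuple n b)) = (f1 - f0)%:E.
Proof.
move=> HV; rewrite /gen_prob /str_mass.
rewrite (eq_eseriesr (g := fun J => (bitR (f1 - f0) J * p2 J)%:E)); last first.
  by move=> J _; rewrite lm_Y (leaf_h _ HV).
have [_ _ _ _ [d0 d1]] := V_inv F01 Fmono Ftop Fdy HV.
have [/andP [f00 f01] f11] := V_le F01 Fmono Ftop Fdy HV.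
apply: series_bits; first by apply/andP; split; lra.
exact: dyadic_sub.
Qed.

Lemma leaf_of x : exists f0 f1, V phi F 0 (val ((phi^-1)%g x)) f0 f1 /\
  x = phi (to_tuple n (val ((phi^-1)%g x))).
Proof.
have [f0 [f1 HV]] := V_ex (Vroot phi F) (c := val ((phi^-1)%g x)) (size_tuple _).
exists f0, f1; split => //.
have -> : to_tuple n (val ((phi^-1)%g x)) = (phi^-1)%g x.
  by apply: val_inj; rewrite to_tupleK // size_tuple.
by rewrite permKV.
Qed.

Definition gp x := fine (gen_prob R Y x).

Lemma gpE x : gen_prob R Y x = (gp x)%:E.
Proof. by have [f0 [f1 [HV ex]]] := leaf_of x; rewrite /gp ex (gp_leaf HV). Qed.

Lemma gp_leaf' b f0 f1 : V phi F 0 b f0 f1 -> gp (phi (to_tuple n b)) = f1 - f0.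
Proof. by move=> HV; rewrite /gp (gp_leaf HV). Qed.

Lemma hroot_bits x : exists p, [/\ 0 <= p <= 1, dyadic N p, gp x = p &
  forall J, hroot x J = bitR p J * p2 J].
Proof.
have [f0 [f1 [HV ex]]] := leaf_of x.
have [_ _ _ _ [d0 d1]] := V_inv F01 Fmono Ftop Fdy HV.
have [/andP [f00 f01] f11] := V_le F01 Fmono Ftop Fdy HV.
exists (f1 - f0); split.
- by apply/andP; split; lra.
- exact: dyadic_sub.
- by rewrite ex (gp_leaf' HV).
- by move=> J; rewrite ex (leaf_h _ HV).
Qed.

End PartH.
Lemma dict_lt_rcons (s t : seq bool) a c : size s = size t ->
  dict_lt (rcons s a) (rcons t c) = dict_lt s t || ((s == t) && (~~ a && c)).
Proof.
elim: s t => [|x s IH] [|y t] //= => [_|[st]].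
  by rewrite andbF orbF.
by rewrite IH // eqseq_cons; case: x; case: y => //=; rewrite ?orbF.
Qed.

Lemma take_sub (s b : seq bool) : (size b < size s)%N ->
  (take (size b) s == b) = (take (size b).+1 s == rcons b false) || (take (size b).+1 s == rcons b true).
Proof.
move=> h; rewrite (take_nth false h) !eqseq_rcons.
by case: (nth false s (size b)); rewrite ?andbT ?andbF ?orbF.
Qed.

Lemma le_ones (s : seq bool) : (s == nseq (size s) true) || dict_lt s (nseq (size s) true).
Proof.
by elim: s => [|x s IH] //=; case: x => //=.
Qed.

Lemma big_or_split (R : realType) (T : finType) (P0 P1 Q : pred T) (f : T -> R) :
  (forall y, P0 y -> ~~ P1 y) ->
  \sum_(y | (P0 y || P1 y) && Q y) f y = \sum_(y | P0 y && Q y) f y + \sum_(y | P1 y && Q y) f y.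
Proof.
move=> h; rewrite (bigID P0) /=; congr (_ + _); apply: eq_bigl => y.
  by case: (P0 y); case: (P1 y); case: (Q y).
case P0y: (P0 y); last by rewrite /= andbT.
by rewrite (negPf (h y P0y)) /= andbF.
Qed.

Section PartI.
Variables (R : realType) (n : nat) (phi : {perm n.-tuple bool}) (F : n.-tuple bool -> R).
Variable N : nat.
Hypothesis F01 : forall b, 0 <= F b <= 1.
Hypothesis Fmono : forall b b', fmt_lt phi b b' -> F b <= F b'.
Hypothesis Ftop : F (phi [tuple of nseq n true]) = 1.
Hypothesis Fdy : forall b, dyadic N (F b).

Local Notation gp := (gp phi F).

Lemma cdf_tree k : forall b f0 f1, V phi F k b f0 f1 -> forall x,
  \sum_(y | (take (size b) (val ((phi^-1)%g y)) == b) && fmt_le phi y x) gp y =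
  if take (size b) (val ((phi^-1)%g x)) == b then F x - f0
  else if dict_lt b (take (size b) (val ((phi^-1)%g x))) then f1 - f0 else 0.
Proof.
elim: k => [|k IH] b f0 f1 HV x.
  have [sb e1 _ _ _] := V_inv F01 Fmono Ftop Fdy HV.
  rewrite addn0 in sb.
  set y0 := phi (to_tuple n b).
  have iy0 : val ((phi^-1)%g y0) = b by rewrite permK to_tupleK.
  have E : forall y, (take (size b) (val ((phi^-1)%g y)) == b) = (y == y0).
    move=> y; rewrite take_oversize ?size_tuple ?sb //; apply/eqP/eqP => [e|->//].
    rewrite /y0 -e; have -> : to_tuple n (val ((phi^-1)%g y)) = (phi^-1)%g y.
      by apply: val_inj; rewrite to_tupleK // size_tuple.
    by rewrite permKV.
  have tx : take (size b) (val ((phi^-1)%g x)) = val ((phi^-1)%g x).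
    by rewrite take_oversize // size_tuple sb.
  rewrite tx.
  have Ex : (y0 == x) = (val ((phi^-1)%g x) == b).
    by rewrite eq_sym -E tx.
  rewrite (eq_bigl (fun y => (y == y0) && fmt_le phi y0 x)); last first.
    by move=> y; rewrite E; case: eqP => // ->.
  have Hle : fmt_le phi y0 x = (val ((phi^-1)%g x) == b) || dict_lt b (val ((phi^-1)%g x)).
    by rewrite /fmt_le /fmt_lt Ex iy0.
  have F1 : F y0 = f1 by rewrite e1 cats0.
  case: (eqVneq (val ((phi^-1)%g x)) b) => ex.
    have xy0 : x = y0 by apply/eqP; rewrite eq_sym Ex ex.
    rewrite Hle ex eqxx /= (eq_bigl (fun y => y == y0)); last by move=> y; rewrite ?andbT.
    by rewrite big_pred1_eq (gp_leaf' F01 Fmono Ftop Fdy HV) xy0 F1.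
  rewrite Hle (negPf ex) /=; case: ifP => _.
    rewrite (eq_bigl (fun y => y == y0)); last by move=> y; rewrite ?andbT.
    by rewrite big_pred1_eq (gp_leaf' F01 Fmono Ftop Fdy HV).
  by rewrite big_pred0 // => y; rewrite andbF.
have [sb e1 _ _ _] := V_inv F01 Fmono Ftop Fdy HV.
have I0 := IH _ _ _ (VL HV) x; have I1 := IH _ _ _ (VR HV) x.
rewrite !size_rcons in I0 I1.
have sbn : (size b < n)%N by lia.
rewrite (eq_bigl (fun y => ((take (size b).+1 (val ((phi^-1)%g y)) == rcons b false)
     || (take (size b).+1 (val ((phi^-1)%g y)) == rcons b true)) && fmt_le phi y x)); last first.
  by move=> y; rewrite take_sub // size_tuple.
rewrite big_or_split; last by move=> y /eqP ->; rewrite eqseq_rcons eqxx.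
rewrite I0 I1.
have sx : (size b < size (val ((phi^-1)%g x)))%N by rewrite size_tuple.
rewrite (take_nth false sx) !eqseq_rcons.
set t := take (size b) _; set be := nth false _ _.
have st : size t = size b by rewrite size_takel // ltnW.
rewrite !dict_lt_rcons //.
case: (eqVneq t b) => [->|tb].
  rewrite dict_lt_irr /=.
  by case: be => /=; ring.
rewrite /= ?andbF ?orbF.
by case: ifP => _; ring.
Qed.

Lemma cdf_root x : \sum_(y | fmt_le phi y x) gp y = F x.
Proof.
have := cdf_tree (Vroot phi F) x; rewrite /= take0 eqxx subr0 => <-.
by apply: eq_bigl => y; rewrite take0.
Qed.

Lemma gp_sum : \sum_y gp y = 1.
Proof.
rewrite -Ftop -cdf_root; apply: eq_bigl => y; apply/esym.
rewrite /fmt_le /fmt_lt permK.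
have L : (val ((phi^-1)%g y) == nseq n true) || dict_lt (val ((phi^-1)%g y)) (nseq n true).
  by have := le_ones (val ((phi^-1)%g y)); rewrite size_tuple.
case/orP: L => [/eqP e|->]; last by rewrite orbT.
apply/orP; left; apply/eqP.
rewrite -[y](permKV phi); congr (phi _); apply: val_inj; by rewrite e.
Qed.

End PartI.
Section PartJ.
Variable R : realType.

Lemma abel (s : nat -> R) M :
  \sum_(0 <= J < M.+1) J%:R * s J =
  M%:R * (\sum_(0 <= J < M.+1) s J) - \sum_(0 <= k < M) (\sum_(0 <= J < k.+1) s J).
Proof.
elim: M => [|M IH].
  by rewrite big_nat1 [X in _ - X]big_geq //; ring.
rewrite big_nat_recr //= IH [X in _ = _ * X - _]big_nat_recr //= [X in _ = _ - X]big_nat_recr //=.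
rewrite -addn1 natrD; ring.
Qed.

Lemma psum_mono (a : nat -> R) k M : (forall J, 0 <= a J) -> (k <= M)%N ->
  \sum_(0 <= J < k.+1) a J <= \sum_(0 <= J < M.+1) a J.
Proof.
move=> a0 kM; rewrite [X in _ <= X](big_cat_nat (n := k.+1)) //= ?ltnS // lerDl.
by apply: sumr_ge0 => i _.
Qed.

Variable N : nat.

Lemma LB (p : R) (a : nat -> R) : 0 <= p <= 1 -> dyadic N p -> (0 < N)%N ->
  (forall J, exists c : nat, a J = c%:R / 2 ^+ J) ->
  (\sum_(J <oo) (a J)%:E = p%:E)%E ->
  (\sum_(J <oo) (J%:R * (bitR p J * p2 J))%:E <= \sum_(J <oo) (J%:R * a J)%:E)%E.
Proof.
move=> p01 dp N0 ha sa.
have a0 : forall J, 0 <= a J.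
  by move=> J; have [c ->] := ha J; rewrite divr_ge0 // exprn_ge0.
pose S k := \sum_(0 <= J < k.+1) a J.
pose D k : R := (Zf p k)%:~R / 2 ^+ k.
have Sp : forall k, S k <= p.
  move=> k; rewrite -lee_fin -sa /S -sumEFin.
  by apply: nneseries_lim_ge => i _ _; rewrite lee_fin.
have Snat : forall k, exists m : nat, S k * 2 ^+ k = m%:R.
  elim => [|k [m hm]].
    by have [c hc] := ha 0%N; exists c; rewrite /S big_nat1 hc expr0 divr1 mulr1.
  have [c hc] := ha k.+1; exists (2 * m + c)%N.
  rewrite /S big_nat_recr //= -/(S k) mulrDl hc natrD natrM -hm exprS divfK ?expf_neq0 //.
  ring.
have SD : forall k, S k <= D k.
  move=> k; have [m hm] := Snat k.
  have h2 : (0 : R) < 2 ^+ k by rewrite exprn_gt0.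
  have hm' : (m%:Z <= Zf p k)%R.
    rewrite /Zf floor_ge_int.
    have -> : ((m%:Z)%:~R : R) = m%:R by [].
    by rewrite -hm ler_pM2r //; exact: Sp.
  rewrite /D ler_pdivlMr // hm.
  have -> : (m%:R : R) = (m%:Z)%:~R by [].
  by rewrite ler_int.
have Bits : forall k, \sum_(0 <= J < k.+1) bitR p J * p2 J = D k.
  by move=> k; rewrite big_mkord bits_partial.
have DN : D N = p by rewrite /D (Zf_dyadic dp (leqnn N)) mulfK // expf_neq0.
pose T := \sum_(0 <= J < N.+1) J%:R * (bitR p J * p2 J).
have TE : T = N%:R * p - \sum_(0 <= k < N) D k.
  rewrite /T abel Bits DN; congr (_ - _); apply: eq_bigr => k _; exact: Bits.
have ser : (\sum_(J <oo) (J%:R * (bitR p J * p2 J))%:E = T%:E)%E.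
  apply: series_fin.
    by move=> J; rewrite mulr_ge0 // mulr_ge0 // ?invr_ge0 ?exprn_ge0 // /bitR; case: (bdigit _ _).
  by move=> J NJ; rewrite /bitR (bdigit_dyadic dp NJ) mul0r mulr0.
rewrite ser.
have key : forall M, (N <= M)%N ->
    N%:R * S M - \sum_(0 <= k < N) D k <= \sum_(0 <= J < M.+1) J%:R * a J.
  move=> M NM; rewrite abel -/(S M).
  have split : \sum_(0 <= k < M) S k = \sum_(0 <= k < N) S k + \sum_(N <= k < M) S k.
    by rewrite (big_cat_nat (n := N)).
  have h1 : \sum_(0 <= k < N) S k <= \sum_(0 <= k < N) D k.
    by apply: ler_sum => k _.
  have h2 : \sum_(N <= k < M) S k <= (M - N)%:R * S M.
    have : \sum_(N <= k < M) S k <= \sum_(N <= k < M) S M.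
      rewrite big_nat_cond [X in _ <= X]big_nat_cond; apply: ler_sum => k /andP [/andP [_ kM] _].
      by apply: psum_mono => //; exact: ltnW.
    by rewrite sumr_const_nat mulr_natl.
  rewrite split; rewrite natrB // in h2; lra.
case EC: (\sum_(J <oo) (J%:R * a J)%:E)%E => [c| |].
- rewrite lee_fin.
  have bound : forall M, (N <= M)%N -> S M <= (c + \sum_(0 <= k < N) D k) / N%:R.
    move=> M NM; rewrite ler_pdivlMr ?ltr0n //.
    have : ((\sum_(0 <= J < M.+1) J%:R * a J)%:E <= c%:E)%E.
      rewrite -EC -sumEFin; apply: nneseries_lim_ge => i _ _.
      by rewrite lee_fin mulr_ge0.
    rewrite lee_fin => h; have := key M NM; lra.
  have pb : p <= (c + \sum_(0 <= k < N) D k) / N%:R.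
    rewrite -lee_fin -sa; apply: nneseries_ub => [k|K]; first by rewrite lee_fin.
    rewrite sumEFin lee_fin.
    apply: le_trans (bound (maxn K N) (leq_maxr _ _)).
    case: K => [|K]; first by rewrite big_geq // /S; apply: sumr_ge0.
    by apply: psum_mono => //; rewrite leq_max leqnSn.
  rewrite TE; move: pb; rewrite ler_pdivlMr ?ltr0n //; lra.
- by rewrite leey.
- exfalso; have : (0 <= \sum_(J <oo) (J%:R * a J)%:E)%E.
    by apply: nneseries_ge0 => i _ _; rewrite lee_fin mulr_ge0.
  by rewrite EC.
Qed.

End PartJ.
Section PartK.
Variable R : realType.

Lemma pow2z (emin e : int) : emin <= e -> exists j : nat, (2:R) ^ e * 2 ^+ (absz emin) = 2 ^+ j.
Proof.
move=> h; exists (absz (e + (absz emin)%:Z)).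
have -> : (2:R) ^+ (absz emin) = 2 ^ ((absz emin)%:Z) by [].
rewrite -expfzDr //.
have -> : (2:R) ^+ (absz (e + (absz emin)%:Z)) = 2 ^ ((absz (e + (absz emin)%:Z))%:Z) by [].
have [e0|e0] := lerP 0 emin.
  by rewrite (gez0_abs e0) gez0_abs //; lia.
by rewrite (ltz0_abs e0) gez0_abs //; lia.
Qed.

Lemma cast_int (sgn : bool) (f j : nat) :
  (((-1) ^+ sgn * f%:Z * 2 ^+ j)%:~R : R) = (-1) ^+ sgn * f%:R * 2 ^+ j.
Proof. by rewrite !rmorphM !rmorphXn /= rmorphN1. Qed.

Lemma float_dyadic E m (x : R) : float_repr E m x -> dyadic (m + absz (fp_emin E)) x.
Proof.
move=> [sgn [f [fm [->|[e [he1 [he2 ->]]]]]]].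
- have [j hj] := pow2z (lexx (fp_emin E)).
  exists ((-1) ^+ sgn * f%:Z * 2 ^+ j); rewrite cast_int -hj exprD.
  field; exact: expf_neq0.
- have [j hj] := pow2z he1.
  exists ((-1) ^+ sgn * (2 ^+ m + f)%N%:Z * 2 ^+ j); rewrite cast_int -hj exprD natrD natrX.
  field; exact: expf_neq0.
Qed.

Lemma dyadic_up N k (x : R) : dyadic N x -> (N <= k)%N -> dyadic k x.
Proof.
move=> [i hi] Nk; exists (i * 2 ^+ (k - N)).
by rewrite -(subnKC Nk) exprD mulrA hi rmorphM rmorphXn /= subnKC.
Qed.

End PartK.
Section PartL.
Variables (R : realType) (n : nat).
Local Open Scope ereal_scope.

Lemma mass_split (Y : seq bool -> option (n.-tuple bool)) :
  str_mass R (fun u => Y u != None) = \sum_(x : n.-tuple bool) gen_prob R Y x.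
Proof.
rewrite /str_mass (eq_eseriesr (g := fun k => \sum_(x : n.-tuple bool)
    (level_mass R (fun u => Y u == Some x) k)%:E)); last first.
  by move=> k _; rewrite lm_partition sumEFin.
by rewrite nneseries_sum // => x k _; rewrite lee_fin lm_ge0.
Qed.

Lemma cost_split (Y : seq bool -> option (n.-tuple bool)) :
  gen_cost R Y = \sum_(x : n.-tuple bool)
     \sum_(k <oo) (k%:R * level_mass R (fun u => Y u == Some x) k)%:E.
Proof.
rewrite /gen_cost (eq_eseriesr (g := fun k => \sum_(x : n.-tuple bool)
    (k%:R * level_mass R (fun u => Y u == Some x) k)%:E)); last first.
  by move=> k _; rewrite lm_partition mulr_sumr sumEFin.
by rewrite nneseries_sum // => x k _; rewrite lee_fin mulr_ge0 // lm_ge0.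
Qed.
End PartL.

Unset Implicit Arguments.

Theorem theorem5p17 (R : realType) (E m n : nat)
    (gamma : n.-tuple bool -> xreal R) (phi : {perm n.-tuple bool})
    (F : n.-tuple bool -> R) :
  is_number_format gamma phi ->
  is_fp_cdf E m phi F ->
  let Y := opt_gen phi F in
  (* halts almost surely *)
  (str_mass R (fun u => Y u != None) = 1%E) /\
  (* Opt is a random variate generator (prefix-free halting set, total mass 1) *)
  is_generator Y (gen_prob R Y) /\
  (* Pr(X <=_B x) = F(x) *)
  (forall x : n.-tuple bool,
     (\sum_(y : n.-tuple bool | fmt_le phi y x) gen_prob R Y y)%E = (F x)%:E) /\
  (* entropy optimality *)
  (forall Y' : seq bool -> option (n.-tuple bool),
     is_generator Y' (gen_prob R Y) -> (gen_cost R Y <= gen_cost R Y')%E).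
Proof.
move=> _ [F01' [Ftop Fmono]] /=.
pose N := (m + absz (fp_emin E)).+1.
have F01 : forall b, 0 <= F b <= 1 by move=> b; exact: (F01' b).2.
have Fdy : forall b, dyadic N (F b).
  by move=> b; apply: (dyadic_up (float_dyadic (F01' b).1)); exact: leqnSn.
have N0 : (0 < N)%N by [].
have mass : str_mass R (fun u => opt_gen phi F u != None) = 1%E.
  rewrite mass_split.
  under eq_bigr do rewrite (gpE F01 Fmono Ftop Fdy).
  by rewrite sumEFin (gp_sum F01 Fmono Ftop Fdy).
split; first exact: mass.
split.
  split; [|split => //].
  move=> u v; rewrite /opt_gen.
  case Eu: (opt_exec phi F u) => [[x [|r rs]]|] //= _ Hv /prefixP [w ev]; subst v.
  have := @opt_app R n phi F n [::] 0 0 1 u w x [::] Eu.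
  rewrite /opt_exec in Hv * => H; rewrite H /= in Hv.
  by case: w Hv H => [|z w] //; rewrite cats0.
split.
  move=> x; under eq_bigr do rewrite (gpE F01 Fmono Ftop Fdy).
  by rewrite sumEFin (cdf_root F01 Fmono Ftop Fdy).
move=> Y' [_ [_ hY']].
rewrite !cost_split; apply: lee_sum => x _.
have [p [p01 dp gpx hb]] := hroot_bits F01 Fmono Ftop Fdy x.
rewrite (eq_eseriesr (g := fun k => (k%:R * (bitR p k * p2 k))%:E)); last first.
  by move=> k _; rewrite lm_Y hb.
apply: (LB p01 dp N0).
  by move=> J; rewrite lm_count; eexists.
have := hY' x; rewrite /gen_prob /str_mass => ->.
by have := gpE F01 Fmono Ftop Fdy x; rewrite /gen_prob /str_mass => ->; rewrite gpx.
Qed.
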